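(* Let $q$ be a prime power and $4\le h\le k$ integers. Let $1\le s\le h$, let $i_1,\ldots,i_s$ be distinct indices in $\{1,\ldots,h\}$ and $a_{i_1},\ldots,a_{i_s}\in\mathbb{F}_q^*$. Suppose the coefficients $a_{i_1},\ldots,a_{i_s}$ take exactly $l\ge 1$ distinct values, taken $r_1,\ldots,r_l\ge 1$ times respectively (so $r_1+\cdots+r_l=s$). Let $\Lambda$ be the number of $(x_1,\ldots,x_k)\in\mathbb{F}_q^k$ satisfying $$a_{i_1}x_{i_1}+\cdots+a_{i_s}x_{i_s}=0\quad\text{and}\quad (x_1+\cdots+x_h)\,x_1x_2\cdots x_h=0.$$ Then $$\Lambda=q^{k-1}-(q-1)^{h-s}q^{k-h}\psi_{s}+q^{k-h}A_{r_1,\ldots,r_l,h-s}.$$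
   Context: For $m\ge 0$, $\psi_m$ is the number of $(x_1,\ldots,x_m)\in\mathbb{F}_q^m$ with $\sum x_i=0$ and all $x_i\ne0$; $\varphi_m$ is the number of such tuples with $\sum x_i=1$ and all $x_i\ne 0$ ($\psi_0=1$, $\varphi_0=0$). For positive integers $r_1,\ldots,r_m$ define recursively $A_{r_1}=\psi_{r_1}$ and $A_{r_1,\ldots,r_m}=\psi_{r_1+\cdots+r_{m-1}}\varphi_{r_m}+(-1)^{r_m}A_{r_1,\ldots,r_{m-1}}$ for $m\ge 2$; moreover, for positive $r_1,\ldots,r_l$, the symbol $A_{r_1,\ldots,r_l,0}$ denotes $A_{r_1,\ldots,r_l}$. *)

(* Defs.v *)
From HB Require Import structures.
From mathcomp Require Import all_boot all_order all_algebra all_field.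
Set Implicit Arguments. Unset Strict Implicit. Unset Printing Implicit Defensive.
Import Order.TTheory GRing.Theory Num.Theory.

Local Open Scope ring_scope.

Definition psi (F : finFieldType) (m : nat) : nat :=
  #|[set x : {ffun 'I_m -> F} | (\sum_(i < m) x i == 0) && [forall i, x i != 0]]|.

Definition phi (F : finFieldType) (m : nat) : nat :=
  #|[set x : {ffun 'I_m -> F} | (\sum_(i < m) x i == 1) && [forall i, x i != 0]]|.

(* A on the reversed list: Arev [:: r_m; r_{m-1}; ...; r_1] = A_{r_1,...,r_m}. *)
Fixpoint Arev (F : finFieldType) (s : seq nat) : int :=
  match s with
  | [::] => 0
  | [:: r] => (psi F r)%:Z
  | r :: t => (psi F (sumn t))%:Z * (phi F r)%:Z + (-1) ^+ r * Arev F t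
  end.

Definition A (F : finFieldType) (rs : seq nat) : int := Arev F (rev rs).

Definition A0 (F : finFieldType) (rs : seq nat) (e : nat) : int :=
  A F (rs ++ (if e == 0%N then [::] else [:: e])).

(* Main.v *)
Require Import Defs.
From HB Require Import structures.
From mathcomp Require Import all_boot all_order all_algebra all_field.
From mathcomp Require Import zify ring.
Set Implicit Arguments. Unset Strict Implicit. Unset Printing Implicit Defensive.
Import Order.TTheory GRing.Theory Num.Theory.
Local Open Scope ring_scope.

Section Gen.
Variables (F : finFieldType) (T : finType).
Implicit Types (H D : {set T}) (x y z : {ffun T -> F}).

Definition Zs H := [set x : {ffun T -> F} | [forall t, (t \notin H) ==> (x t == 0)]].
Definition Ss D := [set x : {ffun T -> F} | [forall t, (x t != 0) == (t \in D)]].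
Definition restr H x : {ffun T -> F} := [ffun t => if t \in H then x t else 0].

Definition addp (p : {ffun T -> F} * {ffun T -> F}) := p.1 + p.2.

Lemma ZsP H x : reflect (forall t, t \notin H -> x t = 0) (x \in Zs H).
Proof.
rewrite inE; apply: (iffP forallP) => [Hx t tH | Hx t].
  by move: (Hx t); rewrite tH /= => /eqP.
by apply/implyP => /Hx ->.
Qed.

Lemma SsP D x : reflect (forall t, (x t != 0) = (t \in D)) (x \in Ss D).
Proof.
rewrite inE; apply: (iffP forallP) => [Hx t | Hx t]; first exact: (eqP (Hx t)).
by rewrite Hx.
Qed.

Lemma Ss_Zs D : Ss D \subset Zs D.
Proof.
apply/subsetP => x /SsP Hx; apply/ZsP => t tD.
by move: (Hx t); rewrite (negbTE tD) => /negbFE/eqP.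
Qed.

Lemma sum_split_gen (X1 X2 : {set {ffun T -> F}}) H1 H2 (f : {ffun T -> F} -> nat) :
  (forall t, t \in H1 -> t \notin H2) -> X1 \subset Zs H1 -> X2 \subset Zs H2 ->
  \sum_(x in addp @: (setX X1 X2)) f x =
  \sum_(y in X1) \sum_(z in X2) f (y + z).
Proof.
move=> dis s1 s2.
rewrite big_imset /=.
  rewrite pair_big_dep /=; apply: eq_big => [p|p _]; by rewrite ?inE.
move=> [y z] [y' z'] /=; rewrite !inE /= => /andP[y1 z2] /andP[y'1 z'2]; rewrite /addp /= => E.
have Ey : y = y'.
  apply/ffunP => t.
  move/(subsetP s1): y1 => /ZsP y1; move/(subsetP s1): y'1 => /ZsP y'1.
  move/(subsetP s2): z2 => /ZsP z2; move/(subsetP s2): z'2 => /ZsP z'2.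
  have := congr1 (fun g : {ffun T -> F} => g t) E; rewrite /= !ffunE.
  case tH1: (t \in H1).
    by rewrite z2 ?z'2 ?dis // !addr0.
  by rewrite y1 ?y'1 ?tH1.
by rewrite Ey; congr pair; move: E; rewrite Ey => /addrI.
Qed.

Lemma Zs_split H1 H2 : (forall t, t \in H1 -> t \notin H2) ->
  Zs (H1 :|: H2) = addp @: (setX (Zs H1) (Zs H2)).
Proof.
move=> dis; apply/setP => x; apply/idP/imsetP.
  move/ZsP => Hx; exists (restr H1 x, restr H2 x).
    rewrite inE /=; apply/andP; split; apply/ZsP => t tH; by rewrite ffunE (negbTE tH).
  apply/ffunP => t; rewrite /addp /= !ffunE.
  case tH1: (t \in H1); first by rewrite (negbTE (dis _ tH1)) addr0.
  case tH2: (t \in H2); first by rewrite add0r.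
  by rewrite Hx ?addr0 // inE tH1 tH2.
move=> [[y z]]; rewrite inE /= => /andP[/ZsP y1 /ZsP z2] ->; rewrite /addp /=.
apply/ZsP => t; rewrite inE negb_or => /andP[t1 t2].
by rewrite ffunE y1 // z2 // addr0.
Qed.

Lemma Ss_split D1 D2 : (forall t, t \in D1 -> t \notin D2) ->
  Ss (D1 :|: D2) = addp @: (setX (Ss D1) (Ss D2)).
Proof.
move=> dis; apply/setP => x; apply/idP/imsetP.
  move/SsP => Hx; exists (restr D1 x, restr D2 x).
    rewrite inE /=; apply/andP; split; apply/SsP => t; rewrite ffunE.
      case tD: (t \in D1); first by rewrite Hx inE tD.
      by rewrite eqxx.
    case tD: (t \in D2); first by rewrite Hx inE tD orbT.
    by rewrite eqxx.
  apply/ffunP => t; rewrite /addp /= !ffunE.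
  case tH1: (t \in D1); first by rewrite (negbTE (dis _ tH1)) addr0.
  case tH2: (t \in D2); first by rewrite add0r.
  by move: (Hx t); rewrite addr0 inE tH1 tH2 => /negbFE/eqP.
move=> [[y z]]; rewrite inE /= => /andP[/SsP y1 /SsP z2] ->; rewrite /addp /=.
apply/SsP => t; rewrite inE ffunE.
case tD1: (t \in D1).
  have := dis _ tD1; rewrite -z2 negbK => /eqP ->.
  by rewrite addr0 y1.
by move: (y1 t); rewrite tD1 => /negbFE/eqP ->; rewrite add0r z2.
Qed.

Lemma sum_Zs_split H1 H2 (f : {ffun T -> F} -> nat) :
  (forall t, t \in H1 -> t \notin H2) ->
  \sum_(x in Zs (H1 :|: H2)) f x = \sum_(y in Zs H1) \sum_(z in Zs H2) f (y + z).
Proof. by move=> dis; rewrite Zs_split // (sum_split_gen (H1:=H1) (H2:=H2)). Qed.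

Lemma sum_Ss_split D1 D2 (f : {ffun T -> F} -> nat) :
  (forall t, t \in D1 -> t \notin D2) ->
  \sum_(x in Ss (D1 :|: D2)) f x = \sum_(y in Ss D1) \sum_(z in Ss D2) f (y + z).
Proof. by move=> dis; rewrite Ss_split // (sum_split_gen (H1:=D1) (H2:=D2)) ?Ss_Zs. Qed.


Definition delta t (a : F) : {ffun T -> F} := [ffun u => if u == t then a else 0].

Lemma delta_inj t : injective (delta t).
Proof. by move=> a b /ffunP /(_ t); rewrite !ffunE eqxx. Qed.

Lemma sum_delta t a : \sum_u delta t a u = a.
Proof.
rewrite (bigD1 t) //= big1 ?addr0; first by rewrite ffunE eqxx.
by move=> u /negbTE ut; rewrite ffunE ut.
Qed.

Lemma Ss1 t : Ss [set t] = (delta t) @: [set a : F | a != 0].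
Proof.
apply/setP => x; apply/idP/imsetP.
  move/SsP => Hx; exists (x t); first by rewrite inE Hx inE.
  apply/ffunP => u; rewrite ffunE; case: eqP => [->//|/eqP ut].
  by move: (Hx u); rewrite inE (negbTE ut) => /negbFE/eqP.
move=> [a]; rewrite inE => a0 ->; apply/SsP => u; rewrite ffunE inE.
by case: (u == t); rewrite ?a0 ?eqxx.
Qed.

Lemma sum_Ss1 t (f : {ffun T -> F} -> nat) :
  \sum_(z in Ss [set t]) f z = \sum_(a : F | a != 0) f (delta t a).
Proof.
rewrite Ss1 big_imset /=; last by move=> a b _ _; apply: delta_inj.
by apply: eq_bigl => a; rewrite inE.
Qed.

Lemma Ss0 : Ss set0 = [set (0 : {ffun T -> F})].
Proof.
apply/setP => x; rewrite inE; apply/idP/eqP.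
  move/SsP => Hx; apply/ffunP => t; rewrite ffunE.
  by move: (Hx t); rewrite inE => /negbFE/eqP.
by move=> ->; apply/SsP => t; rewrite ffunE inE eqxx.
Qed.

Lemma Zs1 t : Zs [set t] = (delta t) @: [set: F].
Proof.
apply/setP => x; apply/idP/imsetP.
  move/ZsP => Hx; exists (x t); first by rewrite inE.
  apply/ffunP => u; rewrite ffunE; case: eqP => [->//|/eqP ut].
  by rewrite Hx // inE.
move=> [a] _ ->; apply/ZsP => u; rewrite ffunE inE.
by move/negbTE => ->.
Qed.

Lemma Zs0 : Zs set0 = [set (0 : {ffun T -> F})].
Proof.
apply/setP => x; rewrite inE; apply/idP/eqP.
  move/ZsP => Hx; apply/ffunP => t; rewrite ffunE.
  by rewrite Hx // inE.
by move=> ->; apply/ZsP => t; rewrite ffunE.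
Qed.

Lemma sum_Zs1 t (f : {ffun T -> F} -> nat) :
  \sum_(z in Zs [set t]) f z = \sum_(a : F) f (delta t a).
Proof.
rewrite Zs1 big_imset /=; last by move=> a b _ _; apply: delta_inj.
by apply: eq_bigl => a; rewrite inE.
Qed.

Lemma disj1 t D : forall u, u \in [set t] -> u \notin D :\ t.
Proof. by move=> u; rewrite !inE => /eqP ->; rewrite eqxx. Qed.

Lemma card_nz : #|[set a : F | a != 0]| = (#|F| - 1)%N.
Proof.
rewrite subn1 -(cardsC1 (0:F)); apply: eq_card => a; by rewrite !inE.
Qed.

Lemma card_Ss n D : #|D| = n -> #|Ss D| = ((#|F| - 1) ^ n)%N.
Proof.
elim: n D => [|n IH] D Dn.
  by move/eqP: Dn; rewrite cards_eq0 => /eqP ->; rewrite Ss0 cards1.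
have : (0 < #|D|)%N by rewrite Dn.
case/card_gt0P => t tD.
have Dt : #|D :\ t| = n by move: Dn; rewrite (cardsD1 t) tD add1n => -[].
rewrite -(setD1K tD) -sum1_card (sum_Ss_split _ (@disj1 t D)) sum_Ss1.
rewrite (eq_bigr (fun _ => (#|F| - 1) ^ n)%N); last first.
  by move=> a _; rewrite sum1_card IH.
by rewrite sum_nat_cond_const expnS card_nz.
Qed.

Lemma card_Zs n D : #|D| = n -> #|Zs D| = (#|F| ^ n)%N.
Proof.
elim: n D => [|n IH] D Dn.
  by move/eqP: Dn; rewrite cards_eq0 => /eqP ->; rewrite Zs0 cards1.
have : (0 < #|D|)%N by rewrite Dn.
case/card_gt0P => t tD.
have Dt : #|D :\ t| = n by move: Dn; rewrite (cardsD1 t) tD add1n => -[].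
rewrite -(setD1K tD) -sum1_card (sum_Zs_split _ (@disj1 t D)) sum_Zs1.
rewrite (eq_bigr (fun _ => #|F| ^ n)%N); last first.
  by move=> a _; rewrite sum1_card IH.
rewrite sum_nat_const expnS mulnC; congr (_ * _)%N; by apply: eq_card => a; rewrite !inE.
Qed.

Definition Nf D w := \sum_(x in Ss D) (\sum_t x t == w : nat).

Lemma sum_nz_one (S w : F) : (\sum_(a : F | a != 0%R) ((a + S)%R == w : nat) + (S == w))%N = 1%N.
Proof.
case: (S =P w) => [->|/eqP ne].
  rewrite big1 // => a a0; by rewrite -subr_eq0 addrK (negbTE a0).
have a0 : w - S != 0 by rewrite subr_eq0 eq_sym.
rewrite (bigD1 (w - S)) //= subrK eqxx big1 //.
move=> a /andP[a0' aw]; apply/eqP; rewrite eqb0; apply: contra aw.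
by move/eqP <-; rewrite addrK.
Qed.

Lemma sum_addf (y z : {ffun T -> F}) : \sum_u (y + z) u = \sum_u y u + \sum_u z u.
Proof. by rewrite -big_split; apply: eq_bigr => u _; rewrite ffunE. Qed.

Lemma Nrec D t w : t \in D -> (Nf D w + Nf (D :\ t) w = #|Ss (D :\ t)|)%N.
Proof.
move=> tD; rewrite /Nf -{1}(setD1K tD) (sum_Ss_split _ (@disj1 t D)) sum_Ss1.
rewrite exchange_big /= -sum1_card -big_split /=; apply: eq_bigr => z _.
rewrite -[X in (_ + X)%N]/((\sum_t z t == w) : nat) -(sum_nz_one (\sum_t z t) w).
congr (_ + _)%N; apply: eq_bigr => a _; by rewrite sum_addf sum_delta.
Qed.

Definition scal (c : T -> F) (x : {ffun T -> F}) : {ffun T -> F} := [ffun t => c t * x t].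

Lemma sum_scale D (c : T -> F) (f : F -> nat) : (forall t, t \in D -> c t != 0) ->
  \sum_(x in Ss D) f (\sum_t c t * x t) = \sum_(x in Ss D) f (\sum_t x t).
Proof.
move=> cD.
pose c' t := if c t == 0 then 1 else c t.
have c'0 t : c' t != 0 by rewrite /c'; case: ifP => [_|/negbT //]; exact: oner_neq0.
rewrite [RHS](reindex (scal c')) /=; last first.
  exists (scal (fun t => (c' t)^-1)) => x _; apply/ffunP => t; rewrite !ffunE.
    by rewrite mulrA mulVf ?mul1r.
  by rewrite mulrA mulfV ?mul1r.
apply: eq_big => x.
  by apply/SsP/SsP => Hx t; rewrite -Hx ?ffunE mulf_eq0 negb_or c'0.
move/SsP => Hx; congr f; apply: eq_bigr => t _; rewrite ffunE /c'.
case: ifP => // /eqP ct0.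
have : t \notin D by apply/negP => /cD; rewrite ct0 eqxx.
by rewrite -Hx negbK => /eqP ->; rewrite !mulr0.
Qed.

Lemma hyper (c : T -> F) t0 w : c t0 != 0 ->
  \sum_(x : {ffun T -> F}) (\sum_t c t * x t == w : nat) = (#|F| ^ #|T|.-1)%N.
Proof.
move=> c0.
have Cw : forall w, \sum_(x : {ffun T -> F}) (\sum_t c t * x t == w : nat) =
                   \sum_(x : {ffun T -> F}) (\sum_t c t * x t == 0 : nat).
  move=> w'; rewrite (reindex (fun x => x + delta t0 (w' / c t0))) /=; last first.
    exists (fun x => x - delta t0 (w' / c t0)) => x _; by rewrite ?addrK ?subrK.
  apply: eq_bigr => x _.
  have -> : \sum_t c t * (x + delta t0 (w' / c t0)) t = \sum_t c t * x t + w'.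
    rewrite (eq_bigr (fun t => c t * x t + c t * delta t0 (w' / c t0) t)); last first.
      by move=> t _; rewrite ffunE mulrDr.
    rewrite big_split /=; congr (_ + _).
    rewrite (bigD1 t0) //= big1 ?addr0; first by rewrite ffunE eqxx mulrC divfK.
    by move=> t /negbTE tt; rewrite ffunE tt mulr0.
  by rewrite -subr_eq0 addrK.
have tot : (\sum_(w : F) \sum_(x : {ffun T -> F}) ((\sum_t c t * x t)%R == w : nat) = #|F| ^ #|T|)%N.
  rewrite exchange_big /= -card_ffun -sum1_card; apply: eq_bigr => x _.
  by rewrite (bigD1 (\sum_t c t * x t)) //= eqxx big1 // => w' /negbTE; rewrite eq_sym => ->.
move: tot; rewrite (eq_bigr _ (fun w' _ => Cw w')) sum_nat_const Cw.
have : (0 < #|T|)%N by apply/card_gt0P; exists t0.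
case: #|T| => // n _; rewrite expnS /=.
rewrite (_ : #|xpredT| = #|F|) // => /eqP; rewrite eqn_pmul2l ?card_gt0 => [/eqP //|].
by apply/card_gt0P; exists 0.
Qed.
End Gen.

Lemma card_sumb (U : finType) (A : {set U}) (P : pred U) :
  #|[set x in A | P x]| = \sum_(x in A) (P x : nat).
Proof.
rewrite -sum1_card [LHS]big_mkcond [RHS]big_mkcond /=; apply: eq_bigr => x _.
by rewrite !inE; case: (x \in A); case: (P x).
Qed.

Lemma Nf0 (F : finFieldType) (T : finType) (w : F) :
  Nf (set0 : {set T}) w = (0 == w : nat).
Proof.
rewrite /Nf Ss0 big_set1; congr (nat_of_bool (_ == _)).
by apply: big1 => t _; rewrite ffunE.
Qed.

Lemma transfer (F : finFieldType) n : forall (T1 T2 : finType) (D1 : {set T1}) (D2 : {set T2}) (w : F),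
  #|D1| = n -> #|D2| = n -> Nf D1 w = Nf D2 w.
Proof.
elim: n => [|n IH] T1 T2 D1 D2 w D1n D2n.
  move/eqP: D1n; move/eqP: D2n; rewrite !cards_eq0 => /eqP -> /eqP ->.
  by rewrite !Nf0.
have : (0 < #|D1|)%N by rewrite D1n.
case/card_gt0P => t1 tD1.
have : (0 < #|D2|)%N by rewrite D2n.
case/card_gt0P => t2 tD2.
have D1t : #|D1 :\ t1| = n by move: D1n; rewrite (cardsD1 t1) tD1 add1n => -[].
have D2t : #|D2 :\ t2| = n by move: D2n; rewrite (cardsD1 t2) tD2 add1n => -[].
have := Nrec w tD1; have := Nrec w tD2.
rewrite !(card_Ss _ D1t) !(card_Ss _ D2t) (IH _ _ _ _ w D1t D2t) => <-.
by move/addIn.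
Qed.

Lemma psi_Nf (F : finFieldType) n : psi F n = Nf [set: 'I_n] (0 : F).
Proof.
rewrite /psi /Nf -card_sumb; apply: eq_card => x; rewrite !inE andbC; congr andb.
by apply: eq_forallb => i; rewrite in_setT eqb_id.
Qed.

Lemma phi_Nf (F : finFieldType) n : phi F n = Nf [set: 'I_n] (1 : F).
Proof.
rewrite /phi /Nf -card_sumb; apply: eq_card => x; rewrite !inE andbC; congr andb.
by apply: eq_forallb => i; rewrite in_setT eqb_id.
Qed.

Lemma phi0 (F : finFieldType) : phi F 0 = 0%N.
Proof. by rewrite phi_Nf (@transfer F 0 _ _ _ (set0 : {set 'I_0})) ?cards0 ?cardsT ?card_ord // Nf0 eq_sym oner_eq0. Qed.

Lemma psi_phi (F : finFieldType) n : (psi F n)%:Z - (phi F n)%:Z = (-1) ^+ n.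
Proof.
elim: n => [|n IH].
  by rewrite phi0 psi_Nf (@transfer F 0 _ _ _ (set0 : {set 'I_0})) ?cards0 ?cardsT ?card_ord // Nf0 eqxx.
have tD : (ord_max : 'I_n.+1) \in [set: 'I_n.+1] by rewrite in_setT.
have Dn : #|[set: 'I_n.+1] :\ ord_max| = n.
  by move: (cardsD1 (ord_max : 'I_n.+1) setT); rewrite in_setT cardsT card_ord add1n => -[].
have h0 := Nrec (0 : F) tD; have h1 := Nrec (1 : F) tD.
rewrite (@transfer F n _ _ ([set: 'I_n.+1] :\ ord_max) [set: 'I_n] 0) ?cardsT ?card_ord // in h0.
rewrite (@transfer F n _ _ ([set: 'I_n.+1] :\ ord_max) [set: 'I_n] 1) ?cardsT ?card_ord // in h1.
rewrite psi_Nf phi_Nf exprS; rewrite psi_Nf phi_Nf in IH.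
rewrite -IH; apply/eqP; rewrite -subr_eq0; apply/eqP.
have : (Nf [set: 'I_n.+1] (0:F) + Nf [set: 'I_n] (0:F))%:Z = (Nf [set: 'I_n.+1] (1:F) + Nf [set: 'I_n] (1:F))%:Z by rewrite h0 h1.
rewrite !PoszD => E.
rewrite mulN1r; lia.
Qed.

Lemma NfG (F : finFieldType) (T : finType) (G : {set T}) (w : F) :
  Nf G w = if w == 0 then psi F #|G| else phi F #|G|.
Proof.
case: eqP => [->|/eqP wnz].
  by rewrite psi_Nf (@transfer F #|G| _ _ G [set: 'I_#|G|]) ?cardsT ?card_ord.
rewrite phi_Nf -(@transfer F #|G| _ _ G [set: 'I_#|G|]) ?cardsT ?card_ord //.
rewrite /Nf -(@sum_scale F T G (fun _ => w^-1) (fun v => (v == 1 : nat))); last first.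
  by move=> t _; rewrite invr_eq0.
apply: eq_bigr => x _; rewrite -mulr_sumr; congr nat_of_bool.
apply/eqP/eqP => [->|h]; first by rewrite mulVf.
by have := congr1 (fun v => w * v) h; rewrite mulrA mulfV // mul1r mulr1.
Qed.

Lemma psi_Ss (F : finFieldType) (T : finType) (D : {set T}) (c : T -> F) :
  (forall t, t \in D -> c t != 0) ->
  \sum_(x in Ss F D) (\sum_t c t * x t == 0 : nat) = psi F #|D|.
Proof.
move=> cD; rewrite (@sum_scale F T D c (fun v => (v == 0 : nat))) //.
by have := NfG D (0 : F); rewrite eqxx.
Qed.

Lemma sumn_counts (F : finFieldType) (T : finType) (us : seq F) : forall (E : {set T}) (f : T -> F),
  uniq us -> (forall t, t \in E -> f t \in us) ->
  sumn [seq #|[set t in E | f t == u]| | u <- us] = #|E|.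
Proof.
elim: us => [|u us IH] E f /=.
  move=> _ H; apply/esym/eqP; rewrite cards_eq0; apply/eqP/setP => t; rewrite inE.
  by apply/negbTE/negP => /H.
case/andP => uus uq H.
have -> : [seq #|[set t in E | f t == u0]| | u0 <- us] =
          [seq #|[set t in [set t in E | f t != u] | f t == u0]| | u0 <- us].
  apply/eq_in_map => u0 u0in; apply: eq_card => t; rewrite !inE.
  case: (f t =P u0) => [->|]; rewrite ?andbF ?andbT //.
  by case: (u0 =P u) uus => [<-|]; rewrite ?u0in ?andbT.
rewrite IH //; last first.
  move=> t; rewrite inE => /andP[tE ftu]; move: (H t tE); rewrite inE.
  by rewrite (negbTE ftu).
rewrite -(cardsID [set t | f t == u] E); congr (_ + _)%N; apply: eq_card => t; rewrite !inE.
  by rewrite andbC.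
by rewrite andbC.
Qed.

Lemma Arev_cons (F : finFieldType) a l0 : l0 != [::] ->
  Arev F (a :: l0) = (psi F (sumn l0))%:Z * (phi F a)%:Z + (-1) ^+ a * Arev F l0.
Proof. by case: l0. Qed.

Lemma core (F : finFieldType) (T : finType) n : forall (vs : seq F) (c : T -> F) (D : {set T}),
  size vs = n.+1 -> uniq vs -> (forall t, t \in D -> c t \in vs) ->
  (\sum_(y in Ss F D) (((\sum_t c t * y t)%R == 0%R) && ((\sum_t y t)%R == 0%R) : nat))%:Z =
  Arev F [seq #|[set t in D | c t == v]| | v <- vs].
Proof.
elim: n => [|n IH] [|v vs] c D // sz uq cin.
  case: vs sz uq cin => // _ _ cin.
  have cv : forall t, t \in D -> c t = v by move=> t /cin; rewrite inE => /eqP.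
  rewrite /=.
  have -> : [set t in D | c t == v] = D.
    by apply/setP => t; rewrite inE; case tD: (t \in D); rewrite // cv ?eqxx.
  have := NfG D (0 : F); rewrite eqxx => <-; rewrite /Nf; congr Posz; apply: eq_bigr => y /SsP Hy.
  have -> : \sum_t c t * y t = v * \sum_t y t.
    rewrite mulr_sumr; apply: eq_bigr => t _; case tD: (t \in D); first by rewrite cv.
    by move: (Hy t); rewrite tD => /negbFE/eqP ->; rewrite !mulr0.
  by case: (\sum_t y t =P 0) => [->|]; rewrite ?mulr0 ?eqxx ?andbF.
case: vs sz uq cin => [|v' vs'] sz uq cin; first by case: sz.
set vs1 := v' :: vs'.
have sz1 : size vs1 = n.+1 by move: sz => /= -[->].
have /andP[vnin uq1] : (v \notin vs1) && uniq vs1 := uq.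
set G := [set t in D | c t == v].
set D' := [set t in D | c t != v].
pose c' t := c t - v.
have c'D' : forall t, t \in D' -> c' t != 0 by move=> t; rewrite inE /c' subr_eq0 => /andP[].
have cinD' : forall t, t \in D' -> c t \in vs1.
  by move=> t; rewrite inE => /andP[/cin]; rewrite inE => /orP[->//|//].
have setE : forall u, u \in vs1 -> [set t in D' | c t == u] = [set t in D | c t == u].
  move=> u uin; apply/setP => t; rewrite !inE.
  case: (c t =P u) => [->|]; rewrite ?andbF ?andbT //.
  by case: (u =P v) vnin => [<-|]; rewrite ?uin ?andbT.
have cardD' : #|D'| = sumn [seq #|[set t in D | c t == u]| | u <- vs1].
  rewrite -(sumn_counts uq1 cinD'); congr sumn; apply/eq_in_map => u uin; by rewrite setE.
have IH' := IH [seq u - v | u <- vs1] c' D'.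
have Emap : [seq #|[set t in D' | c' t == v0]| | v0 <- [seq u - v | u <- vs1]] =
            [seq #|[set t in D | c t == u]| | u <- vs1].
  rewrite -map_comp; apply/eq_in_map => u uin /=; rewrite -setE //; apply: eq_card => t; rewrite !inE /c'.
  by rewrite (inj_eq (addIr (- v))).
rewrite size_map Emap in IH'.
have {}IH' := IH' sz1.
have uqs : uniq [seq u - v | u <- vs1] by rewrite map_inj_uniq // => x y /addIr.
have cins : forall t, t \in D' -> c' t \in [seq u - v | u <- vs1].
  by move=> t /cinD' h; rewrite /c'; exact: (map_f (fun u => u - v) h).
have {}IH' := IH' uqs cins.
rewrite map_cons Arev_cons //.
have stepA : \sum_(y in Ss F D) (((\sum_t c t * y t) == 0) && ((\sum_t y t) == 0) : nat) =
             \sum_(y in Ss F D) (((\sum_t c' t * y t) == 0) && ((\sum_t y t) == 0) : nat).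
  apply: eq_bigr => y _.
  have -> : \sum_t c t * y t = \sum_t c' t * y t + v * \sum_t y t.
    by rewrite mulr_sumr -big_split /=; apply: eq_bigr => t _; rewrite /c' mulrBl subrK.
  by case: (\sum_t y t =P 0) => [->|]; rewrite ?mulr0 ?addr0 ?andbF.
have DE : D = D' :|: G.
  by apply/setP => t; rewrite !inE; case: (t \in D); case: (c t == v).
have disj : forall t, t \in D' -> t \notin G.
  by move=> t; rewrite !inE => /andP[_ /negbTE ->]; rewrite andbF.
rewrite stepA {1}DE (sum_Ss_split _ disj).
have inner : forall y, \sum_(z in Ss F G) (((\sum_t c' t * (y + z) t) == 0) && ((\sum_t (y + z) t) == 0) : nat) =
   (((\sum_t c' t * y t)%R == 0%R) * (if (\sum_t y t)%R == 0%R then psi F #|G| else phi F #|G|))%N.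
  move=> y.
  have -> : (if \sum_t y t == 0 then psi F #|G| else phi F #|G|) = Nf G (- \sum_t y t).
    by rewrite NfG oppr_eq0.
  have Hc : forall z, z \in Ss F G -> \sum_t c' t * (y + z) t = \sum_t c' t * y t.
    move=> z /SsP Hz.
    rewrite (eq_bigr (fun t => c' t * y t + c' t * z t)) => [|t _]; last by rewrite ffunE mulrDr.
    rewrite big_split /= [X in _ + X]big1 ?addr0 // => t _.
    case: (z t =P 0) => [->|/eqP]; first by rewrite mulr0.
    by rewrite Hz inE => /andP[_ /eqP ct]; rewrite /c' ct subrr mul0r.
  rewrite (eq_bigr (fun z : {ffun T -> F} => ((\sum_t c' t * y t == 0) && (\sum_t z t == - \sum_t y t) : nat))); last first.
    by move=> z zG; rewrite Hc // sum_addf addrC addr_eq0.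
  rewrite /Nf; case: (\sum_t c' t * y t == 0); first by rewrite mul1n.
  by rewrite mul0n big1.
rewrite (eq_bigr _ (fun y _ => inner y)).
rewrite -IH' -cardD' -(psi_Ss c'D') -(psi_phi F #|G|).
rewrite -!natz !natr_sum mulr_suml mulr_sumr -big_split /=; apply: eq_bigr => y _.
case: (_ =P 0); case: (_ =P 0) => _ _ /=.
all: rewrite /G ?mul1n ?mul0n ?mul1r ?mul0r ?mulr1 ?mulr0 ?addr0 ?add0r //.
by rewrite addrC subrK.
Qed.
Lemma card_sumT (U : finType) (P : pred U) : #|[set x | P x]| = \sum_x (P x : nat).
Proof.
by rewrite -sum1_card [LHS]big_mkcond /=; apply: eq_bigr => x _; rewrite inE; case: (P x).
Qed.

Unset Implicit Arguments.

Theorem proposition2p4 (F : finFieldType) (h k : nat) (h4 : (4 <= h)%N)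
    (hk : (h <= k)%N) (s : nat) (hs1 : (1 <= s)%N) (hsh : (s <= h)%N)
    (i : 'I_s -> 'I_h) (i_inj : injective i) (a : 'I_s -> F)
    (a_nz : forall t, a t != 0)
    (l : nat) (hl : (1 <= l)%N) (b : 'I_l -> F) (b_inj : injective b)
    (r : 'I_l -> nat) (r_pos : forall j, (1 <= r j)%N)
    (a_in_b : forall t, exists j, a t = b j)
    (r_card : forall j, #|[set t | a t == b j]| = r j) :
  let q := #|F| in
  let x_ (x : {ffun 'I_k -> F}) (j : 'I_h) := x (widen_ord hk j) in
  let Lambda := #|[set x : {ffun 'I_k -> F} |
      (\sum_(t < s) a t * x_ x (i t) == 0) &&
      ((\sum_(j < h) x_ x j) * \prod_(j < h) x_ x j == 0)]| in
  Lambda%:Z = (q ^ (k - 1))%:Z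
              - ((q - 1) ^ (h - s) * q ^ (k - h) * psi F s)%:Z
              + (q ^ (k - h))%:Z * A0 F [seq r j | j <- enum 'I_l] (h - s).
Proof.
move=> q x_ Lambda.
pose w := widen_ord hk.
have w_inj : injective w by move=> j1 j2 /(congr1 val) /= /val_inj.
pose e t := w (i t).
have e_inj : injective e by move=> t1 t2 /w_inj /i_inj.
pose D := [set w j | j : 'I_h].
pose E := [set e t | t : 'I_s].
pose c u := \sum_(t | e t == u) a t.
have cE : forall t, c (e t) = a t.
  by move=> t; rewrite /c (big_pred1 t) // => t'; rewrite /= (inj_eq e_inj).
have c0 : forall u, u \notin E -> c u = 0.
  move=> u uE; apply: big1 => t /eqP etu; move: uE; rewrite -etu.
  by rewrite imset_f.
have Lc : forall x : {ffun 'I_k -> F}, \sum_(t < s) a t * x (e t) = \sum_u c u * x u.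
  move=> x; rewrite (partition_big e xpredT) //=; apply: eq_bigr => u _.
  rewrite /c mulr_suml; apply: eq_bigr => t /eqP <-.
  by [].
have ED : E \subset D by apply/subsetP => u /imsetP [t _ ->]; apply: imset_f.
have cardD : #|D| = h by rewrite card_imset // card_ord.
have cardE : #|E| = s by rewrite card_imset // card_ord.
have cardCD : #|~: D| = (k - h)%N.
  by move: (cardsC D); rewrite cardD => /(congr1 (fun m => m - h)%N); rewrite addKn card_ord.
have cardDE : #|D :\: E| = (h - s)%N by rewrite cardsDS // cardD cardE.
have cnzE : forall u, u \in E -> c u != 0 by move=> u /imsetP[t _ ->]; rewrite cE.
have c0D : forall u, u \notin D -> c u = 0.
  by move=> u uD; apply: c0; apply: contra uD; apply: (subsetP ED).
have SmE : forall y : {ffun 'I_k -> F}, y \in Zs F D -> \sum_(j < h) y (w j) = \sum_u y u.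
  move=> y /ZsP yD; rewrite [RHS](bigID (mem D)) /= [X in _ + X]big1 ?addr0; last first.
    by move=> u /yD.
  rewrite big_imset /=; last by move=> j1 j2 _ _; apply: w_inj.
  by apply: eq_bigl => j; rewrite inE.
have H1 : \sum_(x : {ffun 'I_k -> F}) ((\sum_u c u * x u == 0) : nat) = (q ^ (k-1))%N.
  pose t0 : 'I_s := Ordinal hs1.
  by rewrite (@hyper _ _ c (e t0) 0) ?cE ?a_nz // card_ord subn1.
have PrSs : forall y : {ffun 'I_k -> F}, y \in Zs F D -> (\prod_(j < h) y (w j) != 0) = (y \in Ss F D).
  move=> y /ZsP yD; apply/prodf_neq0/SsP => [H u | H j _].
    case uD: (u \in D); last by rewrite yD ?uD // eqxx.
    by case/imsetP: uD => j _ ->; rewrite H.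
  by rewrite H imset_f.
rewrite /Lambda /x_ card_sumT.
pose P1 (x : {ffun 'I_k -> F}) := (\sum_u c u * x u == 0).
pose Q (x : {ffun 'I_k -> F}) := ((\sum_(j < h) x (w j)) * \prod_(j < h) x (w j) == 0).
rewrite (eq_bigr (fun x => (P1 x && Q x : nat))); last by move=> x _; rewrite /P1 -Lc.
have Hsplit : \sum_x (P1 x : nat) = (\sum_x (P1 x && Q x : nat) + \sum_x (P1 x && ~~ Q x : nat))%N.
  by rewrite -big_split /=; apply: eq_bigr => x _; case: (P1 x); case: (Q x).
pose G (y : {ffun 'I_k -> F}) := (\sum_u c u * y u == 0) && (\sum_u y u != 0).
have H2 : \sum_x (P1 x && ~~ Q x : nat) = (q ^ (k - h) * \sum_(y in Ss F D) (G y : nat))%N.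
  have disj : forall t, t \in D -> t \notin ~: D by move=> t; rewrite inE negbK.
  transitivity (\sum_(x in Zs F (D :|: ~: D)) (P1 x && ~~ Q x : nat)).
    rewrite setUCr; apply: eq_bigl => x; apply/esym/ZsP => t; by rewrite in_setT.
  rewrite (sum_Zs_split _ disj).
  transitivity (\sum_(y in Zs F D) (q ^ (k - h) * ((y \in Ss F D) && G y))%N).
    apply: eq_bigr => y yD.
    rewrite (eq_bigr (fun _ => ((y \in Ss F D) && G y : nat))); last first.
      move=> z /ZsP zD.
      have zw : forall u, u \in D -> z u = 0 by move=> u uD; apply: zD; rewrite inE negbK.
      have -> : P1 (y + z) = P1 y.
        rewrite /P1; congr (_ == _).
        rewrite (eq_bigr (fun u => c u * y u + c u * z u)) => [|u _]; last by rewrite ffunE mulrDr.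
        rewrite big_split /= [X in _ + X]big1 ?addr0 // => u _.
        by case uD: (u \in D); [rewrite zw ?mulr0 | rewrite c0D ?uD ?mul0r].
      have -> : Q (y + z) = Q y.
        rewrite /Q; congr ((_ * _) == 0); apply: eq_bigr => j _; by rewrite ffunE zw ?addr0 ?imset_f.
      rewrite /Q mulf_eq0 negb_or PrSs // /G -(SmE y yD) /P1.
      by case: (y \in Ss F D); rewrite ?andbT ?andbF.
    by rewrite sum_nat_const (card_Zs F cardCD).
  rewrite big_distrr /=.
  rewrite [RHS](eq_bigl (fun y => (y \in Zs F D) && (y \in Ss F D))) => [|y]; last first.
    by case yS: (y \in Ss F D); rewrite ?andbF ?andbT // (subsetP (Ss_Zs _ _) _ yS).
  rewrite big_mkcondr /=; apply: eq_bigr => y _.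
  by case: (y \in Ss F D); rewrite ?muln0.
have H3 : \sum_(y in Ss F D) ((\sum_u c u * y u == 0) : nat) = (psi F s * (q - 1) ^ (h - s))%N.
  have DE : D = E :|: (D :\: E).
    apply/setP => u; rewrite !inE; case uE: (u \in E) => /=.
      by rewrite (subsetP ED).
    by [].
  have disjE : forall u, u \in E -> u \notin D :\: E by move=> u0 uE; rewrite inE uE.
  rewrite {1}DE (sum_Ss_split _ disjE).
  rewrite (eq_bigr (fun y : {ffun 'I_k -> F} => (#|Ss F (D :\: E)| * (((\sum_u c u * y u)%R == 0%R) : nat))%N)); last first.
    move=> y _; rewrite -sum_nat_const; apply: eq_bigr => z /SsP zS; congr (nat_of_bool (_ == _)).
    rewrite (eq_bigr (fun u => c u * y u + c u * z u)) => [|u _]; last by rewrite ffunE mulrDr.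
    rewrite big_split /= [X in _ + X]big1 ?addr0 // => u _.
    case uE: (u \in E); last by rewrite c0 ?uE ?mul0r.
    by move: (zS u); rewrite inE uE /= => /negbFE/eqP ->; rewrite mulr0.
  by rewrite -big_distrr /= (psi_Ss cnzE) cardE (card_Ss F cardDE) mulnC.
have H4 : \sum_(y in Ss F D) ((\sum_u c u * y u == 0) : nat) =
   (\sum_(y in Ss F D) ((((\sum_u c u * y u)%R == 0%R) && ((\sum_u y u)%R == 0%R)) : nat) + \sum_(y in Ss F D) (G y : nat))%N.
  by rewrite -big_split /=; apply: eq_bigr => y _; rewrite /G; case: (_ == 0); case: (_ == 0).
have bnz : forall j, b j != 0.
  move=> j; have := r_pos j; rewrite -r_card => /card_gt0P [t]; rewrite inE => /eqP <-.
  exact: a_nz.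
pose vs := 0 :: rev [seq b j | j <- enum 'I_l].
have szv : size vs = l.+1 by rewrite /= size_rev size_map size_enum_ord.
have uqv : uniq vs.
  rewrite /= rev_uniq map_inj_uniq // enum_uniq andbT mem_rev.
  by apply/mapP => -[j _ /esym/eqP]; rewrite (negbTE (bnz j)).
have cinv : forall u, u \in D -> c u \in vs.
  move=> u uD; rewrite inE mem_rev; case uE: (u \in E); last by rewrite c0 ?uE ?eqxx.
  case/imsetP: uE => t _ ->; rewrite cE; case: (a_in_b t) => j ->.
  by rewrite map_f ?orbT // mem_enum.
have H5 := @core F _ l vs c D szv uqv cinv.
have cnt : [seq #|[set t in D | c t == v]| | v <- vs] = (h - s)%N :: rev [seq r j | j <- enum 'I_l].
  rewrite /vs map_cons; congr cons.
    rewrite -cardDE; apply: eq_card => u; rewrite !inE.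
    case uE: (u \in E) => /=; last by rewrite c0 ?uE ?eqxx ?andbT.
    by case/imsetP: uE => t _ ->; rewrite cE (negbTE (a_nz t)) andbF.
  rewrite map_rev -map_comp; congr rev; apply/eq_in_map => j _ /=.
  rewrite -r_card -(card_imset _ e_inj); apply: eq_card => u; rewrite !inE.
  apply/andP/imsetP => [[uD /eqP cu]|[t]]; last first.
    by rewrite inE => /eqP at_ ->; rewrite cE at_ eqxx (subsetP ED) ?imset_f.
  case uE: (u \in E); last by move: cu; rewrite c0 ?uE // => /esym/eqP; rewrite (negbTE (bnz j)).
  case/imsetP: uE => t _ ut; exists t => //; by rewrite inE -cE -ut cu.
rewrite cnt in H5.
have A0E : A0 F [seq r j | j <- enum 'I_l] (h - s) = Arev F ((h - s)%N :: rev [seq r j | j <- enum 'I_l]).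
  have ne : rev [seq r j | j <- enum 'I_l] != [::].
    by rewrite -size_eq0 size_rev size_map size_enum_ord -lt0n.
  rewrite /A0 /A; case: eqP => [->|_]; last by rewrite cats1 rev_rcons.
  by rewrite cats0 Arev_cons // phi0 mulr0 add0r expr0 mul1r.
rewrite A0E -H5.
rewrite /P1 in Hsplit; rewrite H1 H2 in Hsplit; rewrite H4 in H3.
move: Hsplit H3.
set Lam := \sum_x _.
set M := \sum_(y in Ss F D) _.
set X := \sum_(y in Ss F D) _.
move=> E1 E2.
have E1' : (q ^ (k - 1))%:Z = Lam%:Z + (q ^ (k - h))%:Z * M%:Z by rewrite E1 PoszD PoszM.
have E2' : (psi F s)%:Z * ((q - 1) ^ (h - s))%:Z = X%:Z + M%:Z by rewrite -PoszM -E2 PoszD.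
rewrite E1' !PoszM.
rewrite (_ : ((q - 1) ^ (h - s))%:Z * (q ^ (k - h))%:Z * (psi F s)%:Z =
             (q ^ (k - h))%:Z * ((psi F s)%:Z * ((q - 1) ^ (h - s))%:Z)); last by ring.
rewrite E2'; ring.
Qed.
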